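(* Consider the geometric Brownian motion storage model $dX_0=-\mu X_0\,dt+\sigma X_0\,dW$ on $\mathcal E=(0,\infty)$ with $\mu,\sigma>0$, holding cost $c_0(x)=k_3x$ ($k_3>0$), and any ordering cost $c_1:\{(y,z):0<y\le z\}\to[0,\infty]$ that is continuous, satisfies $c_1\ge k_1>0$, has $c_1(\cdot,z)$ continuously differentiable near $0$ for each $z$ and $c_1(y,\cdot)$ continuously differentiable near $\infty$ for each $y$, and for which $\lim_{y\to0}c_1(y,z)<\infty$ for some $z>0$. Then $\inf\{F_0(y,z):0<y\le z\}=0$ and there is no pair $0<y<z$ minimizing $F_0$; that is, no $(y,z)$ ordering policy attains the infimal $(s,S)$ cost.
   Context: $W$ is a standard Brownian motion, $x_0>0$. Scale density $s(x)=x^{2\mu/\sigma^2}$ and speed density $m(x)=\sigma^{-2}x^{-2-2\mu/\sigma^2}$, with scale measure $dS=s\,dx$ and speed measure $dM=m\,dx$. Define $g_0(x)=\int_{x_0}^x\int_u^\infty2c_0(v)\,dM(v)\,dS(u)$, $\zeta(x)=\int_{x_0}^x2M[u,\infty)\,dS(u)$, and $F_0(y,z)=\frac{c_1(y,z)+g_0(z)-g_0(y)}{\zeta(z)-\zeta(y)}$ for $0<y<z$, $F_0(y,y)=\infty$. For the $(y,z)$ ordering policy (order up to $z$ whenever the level falls to $y$), $F_0(y,z)$ is its long-term average cost. *)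

(* Defs.v *)
From Stdlib Require Import Reals Lra ClassicalEpsilon.
Open Scope R_scope.

Inductive ER : Type := Fin : R -> ER | PInf : ER.

Definition ER_le (a b : ER) : Prop :=
  match a, b with
  | Fin x, Fin y => x <= y
  | _, PInf => True
  | PInf, Fin _ => False
  end.

(* Oriented Riemann integral \int_a^b f (value when f is Riemann integrable,
   0 otherwise; RiemannInt does not depend on the integrability proof). *)
Definition Rint (f : R -> R) (a b : R) : R :=
  match excluded_middle_informative (inhabited (Riemann_integrable f a b)) with
  | left H => RiemannInt (epsilon H (fun _ => True))
  | right _ => 0
  end.

Definition is_Rint_inf (f : R -> R) (a L : R) : Prop :=
  forall eps, 0 < eps -> exists B, forall b, B < b -> Rabs (Rint f a b - L) < eps.

Definition Rint_inf (f : R -> R) (a : R) : R :=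
  epsilon (inhabits 0) (fun L => is_Rint_inf f a L).

Definition scale (mu sigma x : R) : R := Rpower x (2 * mu / sigma ^ 2).

Definition speed (mu sigma x : R) : R :=
  / sigma ^ 2 * Rpower x (-2 - 2 * mu / sigma ^ 2).

(* g_0(x) = \int_{x0}^x \int_u^oo 2 c0(v) dM(v) dS(u). *)
Definition g0 (mu sigma : R) (c0 : R -> R) (x0 x : R) : R :=
  Rint (fun u => Rint_inf (fun v => 2 * c0 v * speed mu sigma v) u
                 * scale mu sigma u) x0 x.

(* zeta(x) = \int_{x0}^x 2 M[u,oo) dS(u). *)
Definition zeta (mu sigma x0 x : R) : R :=
  Rint (fun u => 2 * Rint_inf (speed mu sigma) u * scale mu sigma u) x0 x.

Definition F0 (mu sigma : R) (c0 : R -> R) (x0 : R) (c1 : R -> R -> ER)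
  (y z : R) : ER :=
  if Rlt_dec y z then
    match c1 y z with
    | Fin c => Fin ((c + g0 mu sigma c0 x0 z - g0 mu sigma c0 x0 y)
                    / (zeta mu sigma x0 z - zeta mu sigma x0 y))
    | PInf => PInf
    end
  else PInf.

(* Continuity of c1 : {(y,z) : 0 < y <= z} -> [0,oo] (order topology on [0,oo]). *)
Definition c1_continuous (c1 : R -> R -> ER) : Prop :=
  forall y z, 0 < y -> y <= z ->
  match c1 y z with
  | Fin v => forall eps, 0 < eps -> exists delta, 0 < delta /\
      forall y' z', 0 < y' -> y' <= z' -> Rabs (y' - y) < delta -> Rabs (z' - z) < delta ->
      exists v', c1 y' z' = Fin v' /\ Rabs (v' - v) < eps
  | PInf => forall M, exists delta, 0 < delta /\
      forall y' z', 0 < y' -> y' <= z' -> Rabs (y' - y) < delta -> Rabs (z' - z) < delta ->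
      ER_le (Fin M) (c1 y' z')
  end.

Definition c1_C1_near0 (c1 : R -> R -> ER) : Prop :=
  forall z, 0 < z -> exists eps (h h' : R -> R), 0 < eps /\
    forall y, 0 < y < eps -> y <= z ->
      c1 y z = Fin (h y) /\ derivable_pt_lim h y (h' y) /\ continuity_pt h' y.

Definition c1_C1_nearInf (c1 : R -> R -> ER) : Prop :=
  forall y, 0 < y -> exists B (h h' : R -> R),
    forall z, B < z -> y <= z ->
      c1 y z = Fin (h z) /\ derivable_pt_lim h z (h' z) /\ continuity_pt h' z.

Definition c1_finite_limit0 (c1 : R -> R -> ER) (z : R) : Prop :=
  exists L, forall eps, 0 < eps -> exists delta, 0 < delta /\
    forall y, 0 < y < delta -> y <= z ->
      exists v, c1 y z = Fin v /\ Rabs (v - L) < eps.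

(* Main.v *)
Require Import Defs.
From Stdlib Require Import Reals Lra ClassicalEpsilon.
From Coquelicot Require Import Coquelicot.
Open Scope R_scope.

Lemma Rint_FTC (f G dG : R -> R) a b :
  (forall x, Rmin a b <= x <= Rmax a b -> derivable_pt_lim G x (dG x)) ->
  (forall x, Rmin a b <= x <= Rmax a b -> ex_derive dG x) ->
  (forall x, Rmin a b < x < Rmax a b -> f x = dG x) ->
  Rint f a b = G b - G a.
Proof.
  intros HG Hc Hf.
  assert (H : is_RInt f a b (G b - G a)).
  { apply is_RInt_ext with dG. intros x Hx; symmetry; auto.
    apply (is_RInt_derive G dG a b).
    - intros x Hx; apply is_derive_Reals; auto.
    - intros x Hx; apply (ex_derive_continuous (K:=R_AbsRing) (V:=R_NormedModule) dG); auto. }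
  unfold Rint; destruct excluded_middle_informative as [Hi|n].
  - rewrite <- RInt_Reals. apply is_RInt_unique; exact H.
  - exfalso; apply n; constructor; apply ex_RInt_Reals_0; eexists; exact H.
Qed.

Lemma Rpow_tail p eps : 0 < p -> 0 < eps ->
  exists B, 0 < B /\ forall b, B < b -> 0 < Rpower b (-p) < eps.
Proof.
  intros Hp He. exists (exp (/ (p * eps))). split. apply exp_pos.
  intros b Hb.
  assert (Hb0 : 0 < b) by (pose proof (exp_pos (/ (p*eps))); lra).
  assert (Hl : / (p * eps) < ln b).
  { rewrite <- (ln_exp (/ (p*eps))). apply ln_increasing; auto. apply exp_pos. }
  unfold Rpower. split. apply exp_pos.
  assert (Ht : / eps < p * ln b).
  { apply Rmult_lt_compat_l with (r := p) in Hl; auto.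
    replace (p * / (p * eps)) with (/ eps) in Hl by (field; lra). exact Hl. }
  assert (Hie : 0 < / eps) by (apply Rinv_0_lt_compat; lra).
  replace (- p * ln b) with (- (p * ln b)) by ring. rewrite exp_Ropp.
  assert (He1 : 1 + p * ln b < exp (p * ln b)) by (apply exp_ineq1; lra).
  assert (H2 : / eps < exp (p * ln b)) by lra.
  apply Rinv_lt_contravar in H2. rewrite Rinv_inv in H2. exact H2.
  apply Rmult_lt_0_compat; lra.
Qed.

Lemma is_Rint_inf_unique f a L1 L2 : is_Rint_inf f a L1 -> is_Rint_inf f a L2 -> L1 = L2.
Proof.
  intros H1 H2. destruct (Req_dec L1 L2) as [|Hn]; auto. exfalso.
  assert (He : 0 < Rabs (L1 - L2) / 2).
  { assert (0 < Rabs (L1 - L2)) by (apply Rabs_pos_lt; lra). lra. }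
  destruct (H1 _ He) as [B1 HB1]. destruct (H2 _ He) as [B2 HB2].
  set (b := Rmax B1 B2 + 1).
  assert (h1 : B1 < b) by (unfold b; pose proof (Rmax_l B1 B2); lra).
  assert (h2 : B2 < b) by (unfold b; pose proof (Rmax_r B1 B2); lra).
  specialize (HB1 b h1). specialize (HB2 b h2).
  pose proof (Rabs_triang (L1 - Rint f a b) (Rint f a b - L2)).
  replace (L1 - Rint f a b + (Rint f a b - L2)) with (L1 - L2) in H by ring.
  rewrite <- Rabs_Ropp in HB1. replace (- (Rint f a b - L1)) with (L1 - Rint f a b) in HB1 by ring.
  lra.
Qed.

Lemma Rpower_deriv q x : 0 < x -> derivable_pt_lim (fun v => Rpower v q) x (q * Rpower x (q - 1)).
Proof. intros; apply derivable_pt_lim_power; auto. Qed.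

Lemma inf_int f c p u : 0 < p -> 0 < u ->
  (forall v, 0 < v -> f v = c * Rpower v (-p-1)) ->
  Rint_inf f u = c * Rpower u (-p) / p.
Proof.
  intros Hp Hu Hf.
  assert (Hint : forall b, u < b -> Rint f u b = c * Rpower u (-p) / p - c * Rpower b (-p) / p).
  { intros b Hb.
    rewrite (Rint_FTC f (fun v => -(c/p) * Rpower v (-p)) (fun v => c * Rpower v (-p-1)) u b).
    - field; lra.
    - intros x Hx. rewrite Rmin_left in Hx by lra.
      apply is_derive_Reals.
      replace (c * Rpower x (-p-1)) with (-(c/p) * (-p * Rpower x (-p - 1))) by (field; lra).
      apply is_derive_scal. apply is_derive_Reals. apply Rpower_deriv. lra.
    - intros x Hx. rewrite Rmin_left in Hx by lra.
      eexists. apply is_derive_scal. apply is_derive_Reals.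
      apply Rpower_deriv. lra.
    - intros x Hx. rewrite Rmin_left in Hx by lra. apply Hf. lra. }
  assert (Hlim : is_Rint_inf f u (c * Rpower u (-p) / p)).
  { intros eps He.
    assert (He' : 0 < eps * p / (Rabs c + 1)).
    { apply Rdiv_lt_0_compat. apply Rmult_lt_0_compat; lra. pose proof (Rabs_pos c); lra. }
    destruct (Rpow_tail p _ Hp He') as [B [HB0 HB]].
    exists (Rmax B u). intros b Hb.
    assert (hB : B < b) by (pose proof (Rmax_l B u); lra).
    assert (hu : u < b) by (pose proof (Rmax_r B u); lra).
    rewrite Hint by auto. specialize (HB b hB).
    replace (c * Rpower u (- p) / p - c * Rpower b (- p) / p - c * Rpower u (- p) / p)
      with (- (c * (Rpower b (-p) / p))) by (field; lra).
    rewrite Rabs_Ropp, Rabs_mult, (Rabs_right (Rpower b (-p) / p)).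
    2: { left; apply Rdiv_lt_0_compat; lra. }
    destruct HB as [HB1 HB2].
    assert (Hc : 0 <= Rabs c) by apply Rabs_pos.
    apply Rle_lt_trans with ((Rabs c + 1) * (Rpower b (- p) / p)).
    { apply Rmult_le_compat_r. left; apply Rdiv_lt_0_compat; lra. lra. }
    apply Rmult_lt_compat_l with (r := (Rabs c + 1) / p) in HB2.
    2: apply Rdiv_lt_0_compat; lra.
    replace ((Rabs c + 1) / p * (eps * p / (Rabs c + 1))) with eps in HB2 by (field; lra).
    replace ((Rabs c + 1) * (Rpower b (- p) / p)) with ((Rabs c + 1) / p * Rpower b (- p)) by (field; lra).
    exact HB2. }
  unfold Rint_inf. apply (is_Rint_inf_unique f u).
  - apply (epsilon_spec (inhabits 0) (fun L => is_Rint_inf f u L)). eexists; exact Hlim.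
  - exact Hlim.
Qed.

Lemma Rmin_pos' a b : 0 < a -> 0 < b -> 0 < Rmin a b.
Proof. intros; unfold Rmin; destruct Rle_dec; lra. Qed.

Lemma zeta_closed mu sigma x0 x : 0 < mu -> 0 < sigma -> 0 < x0 -> 0 < x ->
  zeta mu sigma x0 x = 2 / (sigma^2 * (1 + 2*mu/sigma^2)) * (ln x - ln x0).
Proof.
  intros Hm Hs H0 Hx. set (a := 2*mu/sigma^2).
  assert (Ha : 0 < a) by (unfold a; apply Rdiv_lt_0_compat; [lra| apply pow_lt; lra]).
  set (C := 2 / (sigma^2 * (1 + a))).
  assert (Hsp : forall u, 0 < u -> Rint_inf (speed mu sigma) u = / sigma^2 * Rpower u (-(1+a)) / (1+a)).
  { intros u Hu. apply inf_int; auto. lra. intros v Hv. unfold speed. fold a. f_equal. f_equal. ring. }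
  unfold zeta. rewrite (Rint_FTC _ (fun v => C * ln v) (fun v => C * / v)).
  - unfold C; fold a; ring.
  - intros y Hy. assert (0 < Rmin x0 x) by (apply Rmin_pos'; auto).
    apply is_derive_Reals. apply is_derive_scal. apply is_derive_Reals. apply derivable_pt_lim_ln. lra.
  - intros y Hy. assert (0 < Rmin x0 x) by (apply Rmin_pos'; auto).
    auto_derive. lra.
  - intros y Hy. assert (0 < Rmin x0 x) by (apply Rmin_pos'; auto).
    assert (Hy0 : 0 < y) by lra.
    rewrite Hsp by auto. unfold scale. fold a.
    assert (E : Rpower y (-(1+a)) * Rpower y a = / y).
    { rewrite <- Rpower_plus. replace (-(1+a)+a) with (-(1)) by ring.
      rewrite Rpower_Ropp, Rpower_1; auto. }
    unfold C. replace (2 * (/ sigma ^ 2 * Rpower y (- (1 + a)) / (1 + a)) * Rpower y a)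
      with (2 / (sigma^2 * (1+a)) * (Rpower y (-(1+a)) * Rpower y a)).
    rewrite E. reflexivity. field. repeat split; try lra; apply pow_nonzero; lra.
Qed.

Lemma g0_closed mu sigma k3 x0 x : 0 < mu -> 0 < sigma -> 0 < x0 -> 0 < x ->
  g0 mu sigma (fun v => k3 * v) x0 x = k3 / mu * (x - x0).
Proof.
  intros Hm Hs H0 Hx. set (a := 2*mu/sigma^2).
  assert (Hs2 : 0 < sigma^2) by (apply pow_lt; lra).
  assert (Ha : 0 < a) by (unfold a; apply Rdiv_lt_0_compat; lra).
  set (D := k3 / mu).
  assert (Hin : forall u, 0 < u -> Rint_inf (fun v => 2 * (k3 * v) * speed mu sigma v) u
      = (2 * k3 / sigma^2) * Rpower u (-a) / a).
  { intros u Hu. apply inf_int; auto. intros v Hv. unfold speed. fold a.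
    replace (-a-1) with (1 + (-2-a)) by ring. rewrite Rpower_plus, Rpower_1 by auto.
    field. lra. }
  unfold g0. rewrite (Rint_FTC _ (fun v => D * v) (fun v => D)).
  - unfold D; ring.
  - intros y Hy. apply is_derive_Reals.
    auto_derive; auto; ring.
  - intros y Hy. auto_derive. auto.
  - intros y Hy. assert (0 < Rmin x0 x) by (apply Rmin_pos'; auto).
    assert (Hy0 : 0 < y) by lra.
    rewrite Hin by auto. unfold scale. fold a.
    assert (E : Rpower y (-a) * Rpower y a = 1).
    { rewrite <- Rpower_plus. replace (-a+a) with 0 by ring. apply Rpower_O; auto. }
    unfold D. replace (2 * k3 / sigma ^ 2 * Rpower y (- a) / a * Rpower y a)
      with (2 * k3 / sigma ^ 2 / a * (Rpower y (- a) * Rpower y a)) by (field; lra).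
    rewrite E. unfold a. field. lra.
Qed.

Theorem theorem6p7 (mu sigma k1 k3 x0 : R) (c1 : R -> R -> ER) :
  0 < mu -> 0 < sigma -> 0 < k3 -> 0 < k1 -> 0 < x0 ->
  c1_continuous c1 ->
  (forall y z, 0 < y -> y <= z -> ER_le (Fin k1) (c1 y z)) ->
  c1_C1_near0 c1 ->
  c1_C1_nearInf c1 ->
  (exists z, 0 < z /\ c1_finite_limit0 c1 z) ->
  let F := F0 mu sigma (fun x => k3 * x) x0 c1 in
  ((forall y z, 0 < y -> y <= z -> ER_le (Fin 0) (F y z)) /\
   (forall eps, 0 < eps -> exists y z, 0 < y /\ y <= z /\ ER_le (F y z) (Fin eps) /\ F y z <> Fin eps)) /\
  ~ (exists y z, 0 < y /\ y < z /\
       forall y' z', 0 < y' -> y' <= z' -> ER_le (F y z) (F y' z')).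
Proof.
  intros Hm Hs Hk3 Hk1 Hx0 _ Hlow _ _ Hfin F.
  set (C := 2 / (sigma^2 * (1 + 2*mu/sigma^2))).
  set (D := k3 / mu).
  assert (Hs2 : 0 < sigma^2) by (apply pow_lt; lra).
  assert (HC : 0 < C).
  { unfold C. apply Rdiv_lt_0_compat. lra. apply Rmult_lt_0_compat; auto.
    assert (0 < 2*mu/sigma^2) by (apply Rdiv_lt_0_compat; lra). lra. }
  assert (HD : 0 < D) by (unfold D; apply Rdiv_lt_0_compat; lra).
  assert (HF : forall y z c, 0 < y -> y < z -> c1 y z = Fin c ->
     F y z = Fin ((c + D * (z - y)) / (C * (ln z - ln y)))).
  { intros y z c Hy Hyz Hc. unfold F, F0. destruct (Rlt_dec y z); [|lra].
    rewrite Hc. rewrite !g0_closed, !zeta_closed by lra. fold C. fold D.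
    f_equal. assert (ln y < ln z) by (apply ln_increasing; lra). field. repeat split; nra. }
  assert (HA : forall y z, 0 < y -> y <= z -> F y z = PInf \/ exists w, F y z = Fin w /\ 0 < w).
  { intros y z Hy Hyz. destruct (Rlt_dec y z) as [Hlt|Hnl].
    - specialize (Hlow y z Hy Hyz). destruct (c1 y z) as [c|] eqn:Hc.
      + right. simpl in Hlow. rewrite (HF y z c Hy Hlt Hc). eexists; split; [reflexivity|].
        apply Rdiv_lt_0_compat. nra. assert (ln y < ln z) by (apply ln_increasing; lra). nra.
      + left. unfold F, F0. destruct (Rlt_dec y z); [|lra]. rewrite Hc. reflexivity.
    - left. unfold F, F0. destruct (Rlt_dec y z); [lra|]. reflexivity. }
  assert (HB : forall eps, 0 < eps -> exists y z, 0 < y /\ y <= z /\ exists w, F y z = Fin w /\ w < eps).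
  { intros eps He. destruct Hfin as [z0 [Hz0 [L HL]]].
    destruct (HL 1 ltac:(lra)) as [delta [Hd Hv]].
    set (N := Rabs L + 1 + D * z0).
    assert (HN : 0 < N) by (unfold N; pose proof (Rabs_pos L); nra).
    set (t := ln z0 - N / (C * eps) - 1).
    set (y := Rmin (Rmin (delta/2) (z0/2)) (exp t)).
    assert (Hy0 : 0 < y) by (unfold y; repeat apply Rmin_pos'; try lra; apply exp_pos).
    assert (Hy1 : y <= Rmin (delta/2) (z0/2)) by apply Rmin_l.
    assert (Hyd : y < delta) by (pose proof (Rmin_l (delta/2) (z0/2)); lra).
    assert (Hyz : y < z0) by (pose proof (Rmin_r (delta/2) (z0/2)); lra).
    assert (Hyt : y <= exp t) by apply Rmin_r.
    destruct (Hv y ltac:(lra) ltac:(lra)) as [v [Hcv Hvl]].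
    exists y, z0. split; [lra|]. split; [lra|].
    rewrite (HF y z0 v Hy0 Hyz Hcv). eexists; split; [reflexivity|].
    assert (Hlv := Hlow y z0 Hy0 ltac:(lra)). rewrite Hcv in Hlv. simpl in Hlv.
    assert (Hvn : v < Rabs L + 1).
    { pose proof (Rle_abs (v - L)). pose proof (Rle_abs L). lra. }
    assert (Hlny : ln y <= t).
    { rewrite <- (ln_exp t). apply ln_le; auto. }
    assert (Hden : N / eps < C * (ln z0 - ln y)).
    { unfold t in Hlny.
      assert (ln z0 - ln y >= N / (C*eps) + 1) by lra.
      assert (E : N / eps = C * (N / (C*eps))) by (field; lra).
      rewrite E. nra. }
    assert (0 < N / eps) by (apply Rdiv_lt_0_compat; lra). apply Rlt_div_l. lra.
    apply Rmult_lt_compat_l with (r := eps) in Hden; auto.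
    replace (eps * (N / eps)) with N in Hden by (field; lra).
    assert (v + D * (z0 - y) < N) by (unfold N; nra). nra. }
  split; [split|].
  - intros y z Hy Hyz. destruct (HA y z Hy Hyz) as [E|[w [E Hw]]]; rewrite E; simpl; lra.
  - intros eps He. destruct (HB eps He) as [y [z [Hy [Hyz [w [E Hw]]]]]].
    exists y, z. rewrite E. repeat split; auto. simpl; lra. intro E2; inversion E2; lra.
  - intros [y [z [Hy [Hyz Hmin]]]].
    destruct (HA y z Hy ltac:(lra)) as [E|[w [E Hw]]].
    + destruct (HB 1 ltac:(lra)) as [y' [z' [Hy' [Hyz' [w' [E' _]]]]]].
      specialize (Hmin y' z' Hy' Hyz'). rewrite E, E' in Hmin. exact Hmin.
    + destruct (HB w Hw) as [y' [z' [Hy' [Hyz' [w' [E' Hw']]]]]].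
      specialize (Hmin y' z' Hy' Hyz'). rewrite E, E' in Hmin. simpl in Hmin. lra.
Qed.
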